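(* Let $n,k$ be integers with $1<k<n-1$ and let $\mathcal{P}_{k,n}=\{x\in[0,1]^n:\sum_{i=1}^n x_i=k\}$. There is no strong Bernoulli factory for $\mathcal{P}_{k,n}$ that converges exponentially.
   Context: A Bernoulli factory with output set $V$ (for inputs $x\in[0,1]^n$) is a (possibly infinite) rooted binary tree whose internal nodes are labeled by an index $i\in[n]$ or a known constant $c\in(0,1)$ and whose leaves are labeled by elements of $V$; on input $x$ one walks from the root, at a node labeled $i$ flipping a fresh independent coin that is $1$ with probability $x_i$, at a node labeled $c$ a fresh coin of bias $c$, following the edge labeled by the outcome, and outputs the label of the leaf reached; $\mathcal{F}(x)$ is the output ($\emptyset$ if no leaf is reached). For a polytope $\mathcal{P}$ with vertex set $V$, a strong Bernoulli factory for $\mathcal{P}$ is such a factory with output set $V$ that terminates almost surely and satisfies $\mathbb{E}[\mathcal{F}(x)]=x$ for all $x\in\mathcal{P}$. Let $T_{\mathcal{F}}(x)$ be the depth of the leaf at which the execution of $\mathcal{F}$ on input $x$ terminates ($\infty$ if it does not terminate). $\mathcal{F}$ converges exponentially on a domain $S$ (here $S=\mathcal{P}_{k,n}$) if there is a constant $c<1$ with $\Pr[T_{\mathcal{F}}(x)>d]\le c^d$ for all positive integers $d$ and all $x\in S$. *)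

(* Defs.v *)
From HB Require Import structures.
From mathcomp Require Import all_boot all_order all_algebra.
From mathcomp Require Import all_classical all_reals all_analysis.
Set Implicit Arguments. Unset Strict Implicit. Unset Printing Implicit Defensive.
Import Order.TTheory GRing.Theory Num.Theory.
Import numFieldNormedType.Exports.
Local Open Scope classical_set_scope.
Local Open Scope ring_scope.

(* LCoin i  : flip a coin of bias x_i;
   LConst c : flip a coin of known bias c (required to lie in (0,1));
   LLeaf v  : leaf with output v (a point of R^n, a row vector);
   LNone    : no node here (the walk falls off the tree, output is the empty
              output / non-termination). *)
Inductive label (n : nat) (R : Type) :=
  | LCoin of 'I_n
  | LConst of R
  | LLeaf of 'rV[R]_n
  | LNone.
Arguments LNone {n R}.

(* A (possibly infinite) rooted binary tree: the label of the node reached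
   from the root by following the edge-label sequence p (true = outcome 1).
   Labels below a leaf / missing node are irrelevant. *)
Definition bftree (n : nat) (R : Type) := seq bool -> label n R.

Fixpoint reach_from {R : realType} {n : nat} (T : bftree n R) (x : 'rV[R]_n)
    (pre p : seq bool) : R :=
  match p with
  | [::] => 1
  | b :: p' =>
    match T pre with
    | LCoin i => (if b then x ord0 i else 1 - x ord0 i) * reach_from T x (rcons pre b) p'
    | LConst c => (if b then c else 1 - c) * reach_from T x (rcons pre b) p'
    | _ => 0
    end
  end.

Definition reach {R : realType} {n : nat} (T : bftree n R) (x : 'rV[R]_n)
  (p : seq bool) : R := reach_from T x [::] p.

Definition term_prob {R : realType} {n : nat} (T : bftree n R) (x : 'rV[R]_n)
  (m : nat) : R :=
  \sum_(p : m.-tuple bool) (if T (tval p) is LLeaf _ then reach T x p else 0).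

Definition out_contrib {R : realType} {n : nat} (T : bftree n R) (x : 'rV[R]_n)
  (j : 'I_n) (m : nat) : R :=
  \sum_(p : m.-tuple bool)
     (if T (tval p) is LLeaf v then reach T x p * v ord0 j else 0).

(* Pr[T_F(x) > d] (non-termination counts as T = infinity). *)
Definition tail_prob {R : realType} {n : nat} (T : bftree n R) (x : 'rV[R]_n)
  (d : nat) : R := 1 - \sum_(m < d.+1) term_prob T x m.

Definition vertex {R : realType} {n : nat} (S : set 'rV[R]_n) (v : 'rV[R]_n) :=
  S v /\ forall y z : 'rV[R]_n, S y -> S z -> forall t : R, 0 < t < 1 ->
     v = t *: y + (1 - t) *: z -> y = z.

Definition Pkn (R : realType) (n k : nat) : set 'rV[R]_n :=
  [set x | (forall i, 0 <= x ord0 i <= 1) /\ \sum_(i < n) x ord0 i = k%:R].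

Definition strong_BF {R : realType} {n : nat} (S : set 'rV[R]_n) (T : bftree n R) :=
  (forall p, match T p with
             | LConst c => 0 < c < 1
             | LLeaf v => vertex S v
             | _ => True
             end)
  /\ (forall x, S x -> (fun N => \sum_(m < N) term_prob T x m) @ \oo --> (1 : R))
  /\ (forall x, S x -> forall j : 'I_n,
        (fun N => \sum_(m < N) out_contrib T x j m) @ \oo --> x ord0 j).

Definition converges_exp {R : realType} {n : nat} (S : set 'rV[R]_n) (T : bftree n R) :=
  exists c : R, c < 1 /\
    forall x, S x -> forall d : nat, (0 < d)%N -> tail_prob T x d <= c ^+ d.
Arguments Pkn : clear implicits.

(* Main.v *)
Require Import Defs.
From mathcomp Require Import all_boot all_order all_algebra.
From mathcomp Require Import all_classical all_reals all_analysis.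
From mathcomp Require Import ring lra zify.
Set Implicit Arguments. Unset Strict Implicit. Unset Printing Implicit Defensive.
Import Order.TTheory GRing.Theory Num.Theory.
Import numFieldNormedType.Exports.
Local Open Scope classical_set_scope.
Local Open Scope ring_scope.

Definition constsOK {R : realType} {n : nat} (T : bftree n R) :=
  forall p, match T p with LConst c => 0 < c < 1 | _ => True end.

Fixpoint hasstep {R : realType} {n : nat} (T : bftree n R) (i : 'I_n) (b : bool)
  (pre p : seq bool) : bool :=
  match p with
  | [::] => false
  | b' :: p' => (match T pre with LCoin i' => (i' == i) && (b' == b) | _ => false end)
               || hasstep T i b (rcons pre b') p'
  end.

Fixpoint sm {R : realType} {n : nat} (T : bftree n R) (small : 'I_n -> bool -> bool)
  (pre p : seq bool) : nat :=
  match p with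
  | [::] => 0
  | b' :: p' => ((match T pre with LCoin i' => small i' b' | _ => false end) : nat)
               + sm T small (rcons pre b') p'
  end.

Definition fac {R : realType} {n : nat} (x : 'rV[R]_n) (i : 'I_n) (b : bool) : R :=
  if b then x ord0 i else 1 - x ord0 i.

Lemma reach_ge0 {R : realType} {n : nat} (T : bftree n R) (x : 'rV[R]_n) (pre p : seq bool) :
  constsOK T -> (forall i, 0 <= x ord0 i <= 1) -> 0 <= reach_from T x pre p.
Proof.
move=> HT Hx; elim: p pre => [|b p IH] pre /=; first exact: ler01.
have := HT pre; case: (T pre) => [i|c|v|] //= Hc.
  apply: mulr_ge0 => //; case: b; have := Hx i; lra.
apply: mulr_ge0 => //; case: b; lra.
Qed.

Lemma reach_zero {R : realType} {n : nat} (T : bftree n R) (y : 'rV[R]_n) (i0 : 'I_n) (b0 : bool) (pre p : seq bool) :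
  constsOK T ->
  (forall i b, ~~ ((i == i0) && (b == b0)) -> 0 < fac y i b) ->
  ~~ hasstep T i0 b0 pre p -> reach_from T y pre p = 0 ->
  forall x, reach_from T x pre p = 0.
Proof.
move=> HT Hy; elim: p pre => [|b p IH] pre /=; first by move=> _ /eqP; rewrite oner_eq0.
have := HT pre; case: (T pre) => [i|c|v|] //= Hc.
  rewrite negb_or => /andP[Hn Hh] /eqP; rewrite mulf_eq0 => /orP[|/eqP H0 x].
    by have := Hy i b Hn; rewrite /fac => /gt_eqF ->.
  by rewrite (IH _ Hh H0) mulr0.
move=> Hh /eqP; rewrite mulf_eq0 => /orP[|/eqP H0 x].
  by case: b {Hh}; case/andP: Hc => ? ?; move/eqP; lra.
by rewrite (IH _ Hh H0) mulr0.
Qed.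

Lemma sm1 {R : realType} {n : nat} (T : bftree n R) (small : 'I_n -> bool -> bool) (i : 'I_n) (b : bool) (pre p : seq bool) :
  small i b -> hasstep T i b pre p -> (1 <= sm T small pre p)%N.
Proof.
move=> Hs; elim: p pre => [|b' p IH] pre //=.
case: (T pre) => [i'|c|v|] /=; last 3 first.
- by move/IH. - by move/IH. - by move/IH.
case/orP => [/andP[/eqP -> /eqP ->]|/IH]; first by rewrite Hs.
by move=> H; apply: leq_trans H (leq_addl _ _).
Qed.

Lemma sm2 {R : realType} {n : nat} (T : bftree n R) (small : 'I_n -> bool -> bool) (i1 : 'I_n) b1 (i2 : 'I_n) b2 (pre p : seq bool) :
  small i1 b1 -> small i2 b2 -> b1 != b2 ->
  hasstep T i1 b1 pre p -> hasstep T i2 b2 pre p -> (2 <= sm T small pre p)%N.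
Proof.
move=> Hs1 Hs2 Hb; elim: p pre => [|b' p IH] pre //=.
case: (T pre) => [i'|c|v|] /=; last 3 first.
- by move=> /IH H /H. - by move=> /IH H /H. - by move=> /IH H /H.
case/orP => [/andP[/eqP Ei /eqP Eb]|H1].
  subst i' b'; case/orP => [/andP[_ /eqP E]|H2]; first by rewrite E eqxx in Hb.
  by rewrite Hs1 add1n ltnS (sm1 Hs2 H2).
case/orP => [/andP[/eqP Ei /eqP Eb]|H2].
  subst i' b'; rewrite Hs2; by rewrite add1n ltnS (sm1 Hs1 H1).
by apply: leq_trans (IH _ H1 H2) (leq_addl _ _).
Qed.


Lemma reach_ratio {R : realType} {n : nat} (T : bftree n R) (small : 'I_n -> bool -> bool)
  (x x0 : 'rV[R]_n) (r rho : R) (pre p : seq bool) :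
  constsOK T -> (forall i, 0 <= x ord0 i <= 1) -> (forall i, 0 <= x0 ord0 i <= 1) ->
  0 <= r <= 1 -> 1 <= rho ->
  (forall i b, small i b -> fac x i b = r * fac x0 i b) ->
  (forall i b, ~~ small i b -> fac x i b <= rho * fac x0 i b) ->
  reach_from T x pre p <= r ^+ sm T small pre p * rho ^+ size p * reach_from T x0 pre p.
Proof.
move=> HT Hx Hx0 Hr Hrho Hs Hl.
elim: p pre => [|b p IH] pre /=; first by rewrite !expr0 !mulr1.
have R0 : 0 <= reach_from T x (rcons pre b) p by apply: reach_ge0.
have R00 : 0 <= reach_from T x0 (rcons pre b) p by apply: reach_ge0.
have {IH} IH := IH (rcons pre b).
have rp : forall m, 0 <= r ^+ m by move=> m; apply: exprn_ge0; case/andP: Hr.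
have rhop : forall m, 0 <= rho ^+ m by move=> m; apply: exprn_ge0; lra.
have := rp (sm T small (rcons pre b) p); have := rhop (size p).
rewrite exprS.
set A := reach_from T x _ _ in IH R0 *; set A0 := reach_from T x0 _ _ in IH R00 *.
set u := r ^+ _; set w := rho ^+ _ => Hw Hu.
have B0 : 0 <= u * w * A0 by rewrite !mulr_ge0.
have := HT pre; case: (T pre) => [i|c|v|] /= Hc; last 2 first.
- by rewrite !mulr0.
- by rewrite !mulr0.
- have Hf0 : 0 <= fac x0 i b by rewrite /fac; case: (b); have := Hx0 i; lra.
  have Hf : 0 <= fac x i b by rewrite /fac; case: (b); have := Hx i; lra.
  change ((if b then x ord0 i else 1 - x ord0 i)) with (fac x i b).
  change ((if b then x0 ord0 i else 1 - x0 ord0 i)) with (fac x0 i b).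
  case Es: (small i b) => /=.
  + rewrite (Hs _ _ Es) add1n exprS.
    have : u * w * A0 <= u * (rho * w) * A0.
      apply: ler_wpM2r => //; apply: ler_wpM2l => //.
      by rewrite -{1}(mul1r w); apply: ler_wpM2r.
    have Hrf : 0 <= r * fac x0 i b by apply: mulr_ge0 => //; case/andP: Hr.
    have : r * fac x0 i b * A <= r * fac x0 i b * (u * w * A0).
      by apply: ler_wpM2l.
    rewrite -/u => H1 H2.
    have -> : r * u * (rho * w) * (fac x0 i b * A0) = r * fac x0 i b * (u * (rho * w) * A0) by ring.
    apply: (le_trans H1); exact: ler_wpM2l.
  + have -> : (false + sm T small (rcons pre b) p)%N = sm T small (rcons pre b) p by [].
    rewrite -/u.
    have HL := Hl i b (negbT Es).
    have : fac x i b * A <= rho * fac x0 i b * A by apply: ler_wpM2r.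
    have : rho * fac x0 i b * A <= rho * fac x0 i b * (u * w * A0).
      by apply: ler_wpM2l => //; apply: mulr_ge0 => //; lra.
    have -> : u * (rho * w) * (fac x0 i b * A0) = rho * fac x0 i b * (u * w * A0) by ring.
    move=> Ha Hb; exact: le_trans Hb Ha.
- have Hf : 0 <= (if b then c else 1 - c) by case: (b); lra.
  have -> : (false + sm T small (rcons pre b) p)%N = sm T small (rcons pre b) p by [].
  rewrite -/u.
  set f := (if b then c else 1 - c) in Hf *.
  have : f * A <= f * (u * w * A0) by apply: ler_wpM2l.
  have H2 : f * (u * w * A0) <= rho * (f * (u * w * A0)).
    by rewrite -{1}(mul1r (f * _)); apply: ler_wpM2r => //; rewrite !mulr_ge0.
  have -> : u * (rho * w) * (f * A0) = rho * (f * (u * w * A0)) by ring.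
  move=> H1; exact: le_trans H1 H2.
Qed.


Lemma psum_le_lim {R : realType} (a : nat -> R) (l : R) :
  (forall m, 0 <= a m) -> (fun N => \sum_(m < N) a m) @ \oo --> l ->
  forall N, \sum_(m < N) a m <= l.
Proof.
move=> Ha Hl N.
have Hnd : {homo (fun N => \sum_(m < N) a m) : n m / (n <= m)%N >-> n <= m}.
  move=> p q Hpq; rewrite -(subnKC Hpq) big_split_ord /= lerDl.
  by apply: sumr_ge0 => i _.
have := nondecreasing_cvgn_le Hnd (cvgP _ Hl) N.
by rewrite (cvg_lim _ Hl).
Qed.

Lemma psum_zero {R : realType} (a : nat -> R) :
  (forall m, 0 <= a m) -> (fun N => \sum_(m < N) a m) @ \oo --> 0 ->
  forall m, a m = 0.
Proof.
move=> Ha Hl m; have := psum_le_lim Ha Hl m.+1.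
rewrite big_ord_recr /= => H.
have : 0 <= \sum_(i < m) a i by apply: sumr_ge0.
have := Ha m; lra.
Qed.

Lemma lim_le_bound {R : realType} (u : nat -> R) (l B : R) :
  u @ \oo --> l -> (forall N, u N <= B) -> l <= B.
Proof.
move=> Hl HB; apply: (cvgr_to_le Hl).
by near=> N; apply: HB.
Unshelve. all: end_near.
Qed.


Lemma sum_ite {R : realType} (n k : nat) (a b : R) : (k <= n)%N ->
  \sum_(i < n) (if (i < k)%N then a else b) = a *+ k + b *+ (n - k).
Proof.
move=> Hkn.
rewrite -(big_mkord xpredT (fun i => if (i < k)%N then a else b)).
rewrite (big_cat_nat (leq0n k) Hkn) /=.
rewrite (@eq_big_nat _ _ _ 0 k _ (fun _ => a)); last by move=> i /andP[_ ->].
rewrite (@eq_big_nat _ _ _ k n _ (fun _ => b)); last first.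
  by move=> i /andP[H _]; rewrite ltnNge H.
by rewrite !sumr_const_nat subn0.
Qed.

Lemma sum_pt {R : realType} (n : nat) (j : 'I_n) (t u : R) :
  \sum_(i < n) (if i == j then t else u) = t + u *+ n.-1.
Proof.
rewrite (bigD1 j) //= eqxx; congr (_ + _).
rewrite (eq_bigr (fun _ => u)); last by move=> i /negbTE ->.
by rewrite sumr_const cardC1 card_ord.
Qed.

Lemma exists_small {R : realType} (n k : nat) (v : 'rV[R]_n) (j0 : 'I_n) :
  (forall i, 0 <= v ord0 i <= 1) -> \sum_(i < n) v ord0 i = k%:R ->
  (k <= j0)%N -> (k <= n)%N -> 0 < v ord0 j0 ->
  exists i1 : 'I_n, (i1 < k)%N /\ v ord0 i1 < 1.
Proof.
move=> Hv Hs Hj Hkn Hpos.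
apply/not_existsP => Hall.
have Hge : forall i : 'I_n, (i < k)%N -> 1 <= v ord0 i.
  move=> i Hi; have := Hall i; rewrite not_andE => -[//|].
  by move/negP; rewrite -leNgt.
have : \sum_(i < n) ((if (i < k)%N then 1 else 0) + (if i == j0 then v ord0 j0 else 0))
       <= \sum_(i < n) v ord0 i.
  apply: ler_sum => i _.
  case: ifP => Hik.
    have -> : (i == j0) = false.
      by apply/negbTE; apply/eqP => E; move: Hik; rewrite E ltnNge Hj.
    by rewrite addr0; apply: Hge.
  rewrite add0r; case: eqP => [->//|_]; by have := Hv i; lra.
rewrite big_split /= sum_ite // sum_pt Hs.
rewrite !mul0rn !addr0.

lra.
Qed.


Definition leavesOK {R : realType} {n : nat} (T : bftree n R) :=
  forall p v, T p = LLeaf v -> forall i, 0 <= v ord0 i <= 1.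

Lemma oc_zero {R : realType} {n : nat} (T : bftree n R) (y : 'rV[R]_n) (j : 'I_n) :
  constsOK T -> leavesOK T -> (forall i, 0 <= y ord0 i <= 1) ->
  (fun N => \sum_(m < N) out_contrib T y j m) @ \oo --> 0 ->
  forall p v, T p = LLeaf v -> 0 < v ord0 j -> reach T y p = 0.
Proof.
move=> HT HL Hy Hl p v Hp Hv.
have Ht : forall m (q : m.-tuple bool),
    0 <= (if T (tval q) is LLeaf v then reach T y q * v ord0 j else 0).
  move=> m q; case E: (T (tval q)) => [i|c|w|] //.
  apply: mulr_ge0; first exact: reach_ge0.
  by case/andP: (HL _ _ E j).
have Hnn : forall m, 0 <= out_contrib T y j m.
  by move=> m; apply: sumr_ge0 => q _; apply: Ht.
have := psum_zero Hnn Hl (size p).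
rewrite /out_contrib => H.
have := @psumr_eq0P _ _ xpredT _ (fun q _ => Ht _ q) H (in_tuple p) isT.
rewrite /= Hp => /eqP; rewrite mulf_eq0 (gt_eqF Hv) orbF => /eqP.
done.
Qed.

Lemma oc_one {R : realType} {n : nat} (T : bftree n R) (y : 'rV[R]_n) (j : 'I_n) :
  constsOK T -> leavesOK T -> (forall i, 0 <= y ord0 i <= 1) ->
  (fun N => \sum_(m < N) term_prob T y m) @ \oo --> (1 : R) ->
  (fun N => \sum_(m < N) out_contrib T y j m) @ \oo --> (1 : R) ->
  forall p v, T p = LLeaf v -> v ord0 j < 1 -> reach T y p = 0.
Proof.
move=> HT HL Hy Ht1 Ho1 p v Hp Hv.
have Ht : forall m (q : m.-tuple bool),
    0 <= (if T (tval q) is LLeaf v then reach T y q * (1 - v ord0 j) else 0).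
  move=> m q; case E: (T (tval q)) => [i|c|w|] //.
  apply: mulr_ge0; first exact: reach_ge0.
  by case/andP: (HL _ _ E j) => _; rewrite subr_ge0.
have Hd : forall m, term_prob T y m - out_contrib T y j m =
   \sum_(q : m.-tuple bool) (if T (tval q) is LLeaf v then reach T y q * (1 - v ord0 j) else 0).
  move=> m; rewrite /term_prob /out_contrib -sumrB; apply: eq_bigr => q _.
  by case: (T (tval q)) => [i|c|w|]; rewrite ?subrr // mulrBr mulr1.
have Hnn : forall m, 0 <= term_prob T y m - out_contrib T y j m.
  by move=> m; rewrite Hd; apply: sumr_ge0 => q _; apply: Ht.
have Hl : (fun N => \sum_(m < N) (term_prob T y m - out_contrib T y j m)) @ \oo --> 0.
  have -> : (fun N => \sum_(m < N) (term_prob T y m - out_contrib T y j m)) =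
     (fun N => \sum_(m < N) term_prob T y m) - (fun N => \sum_(m < N) out_contrib T y j m).
    by apply: funext => N /=; rewrite sumrB.
  by have := cvgB Ht1 Ho1; rewrite subrr; apply; apply: eventually_filter.
have := psum_zero Hnn Hl (size p).
rewrite Hd => H.
have := @psumr_eq0P _ _ xpredT _ (fun q _ => Ht _ q) H (in_tuple p) isT.
rewrite /= Hp => /eqP; rewrite mulf_eq0 subr_eq0 (gt_eqF Hv) orbF => /eqP.
done.
Qed.

Lemma tp_ge0 {R : realType} {n : nat} (T : bftree n R) (x : 'rV[R]_n) m :
  constsOK T -> (forall i, 0 <= x ord0 i <= 1) -> 0 <= term_prob T x m.
Proof.
move=> HT Hx; apply: sumr_ge0 => q _; case: (T (tval q)) => // v.
exact: reach_ge0.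
Qed.


Lemma geo_bound {R : realType} (tp : nat -> R) (rho c : R) :
  0 <= c -> c <= 1 -> 1 <= rho -> rho * c < 1 ->
  (forall m, 0 <= tp m <= 1) -> (forall m, tp m.+2 <= c ^+ m.+1) ->
  forall N, \sum_(m < N) rho ^+ m * tp m <= 1 + rho + rho ^+ 2 / (1 - rho * c).
Proof.
move=> Hc0 Hc1 Hr Hq Htp Hc N.
set q := rho * c.
have Hq1 : 0 < 1 - q by rewrite subr_gt0.
have Hq0 : 0 <= q by rewrite mulr_ge0 //; lra.
have Hnn : forall m, 0 <= rho ^+ m * tp m.
  by move=> m; rewrite mulr_ge0 // ?exprn_ge0 //; [lra | case/andP: (Htp m)].
have S : forall M, \sum_(m < M.+2) rho ^+ m * tp m <= 1 + rho + rho ^+ 2 * (1 - q ^+ M) / (1 - q).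
  elim=> [|K IH].
    rewrite !big_ord_recr big_ord0 /= expr0 expr1 subrr mulr0 mul0r addr0 add0r mul1r.
    have := Htp 0%N; have := Htp 1%N => /andP[? ?] /andP[? ?].
    have : rho * tp 1%N <= rho * 1 by apply: ler_wpM2l => //; lra.
    lra.
  rewrite big_ord_recr /=.
  have H1 : rho ^+ K.+2 * tp K.+2 <= rho ^+ 2 * q ^+ K.
    apply: (le_trans (y := rho ^+ K.+2 * c ^+ K.+1)).
      by apply: ler_wpM2l => //; apply: exprn_ge0; lra.
    have -> : rho ^+ K.+2 * c ^+ K.+1 = c * (rho ^+ 2 * q ^+ K).
      by rewrite /q exprMn !exprS expr0; ring.
    rewrite -{2}(mul1r (rho ^+ 2 * q ^+ K)); apply: ler_wpM2r => //.
    by rewrite mulr_ge0 ?exprn_ge0 //; lra.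
  have E : rho ^+ 2 * (1 - q ^+ K.+1) / (1 - q) = rho ^+ 2 * (1 - q ^+ K) / (1 - q) + rho ^+ 2 * q ^+ K.
    rewrite [q ^+ K.+1]exprS; field; exact: lt0r_neq0.
  rewrite E; lra.
have : \sum_(m < N) rho ^+ m * tp m <= \sum_(m < N.+2) rho ^+ m * tp m.
  rewrite !big_ord_recr /= -addrA lerDl; apply: addr_ge0; apply: Hnn.
have : rho ^+ 2 * (1 - q ^+ N) / (1 - q) <= rho ^+ 2 / (1 - q).
  apply: ler_wpM2r; first by rewrite invr_ge0; lra.
  rewrite -[X in _ <= X]mulr1; apply: ler_wpM2l; first by apply: exprn_ge0; lra.
  rewrite lerBlDr lerDl; exact: exprn_ge0.
have := S N; lra.
Qed.


Theorem theorem7p1 (R : realType) (n k : nat) :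
  (1 < k)%N -> (k < n - 1)%N ->
  ~ exists T : bftree n R, strong_BF (Pkn R n k) T /\ converges_exp (Pkn R n k) T.
Proof.
move=> Hk1 Hkn [T [[Hlab [Hterm Hout]] [c [Hc1 Hexp]]]].
have Hkn' : (k < n)%N by apply: (leq_trans Hkn); exact: leq_subr.
have HT : constsOK T by move=> p; have := Hlab p; case: (T p).
have HL : leavesOK T by move=> p v Hp; have := Hlab p; rewrite Hp => -[Hv _]; exact: (proj1 Hv).
have HLs : forall p v, T p = LLeaf v -> \sum_(i < n) v ord0 i = k%:R.
  by move=> p v Hp; have := Hlab p; rewrite Hp => -[Hv _]; exact: (proj2 Hv).
pose j0 := Ordinal Hkn'.
pose small (i : 'I_n) (b : bool) := if b then (k <= i)%N else (i < k)%N.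
have hk2 : (2 : R) <= k%:R by rewrite (ler_nat R 2 k).
have hkn1 : (k%:R + 1 : R) <= (n.-1)%:R by rewrite natr1 ler_nat -subn1.
pose y0 : 'rV[R]_n := \row_(i < n) (if i == j0 then 0 else k%:R / (n.-1)%:R).
have Hn1 : (0 : R) < (n.-1)%:R by lra.
have Hq0 : (0 : R) < k%:R / (n.-1)%:R < (1 : R).
  by apply/andP; split; [apply: divr_gt0 | rewrite ltr_pdivrMr // mul1r]; lra.
have Hq1 : (0 : R) < (k%:R - 1) / (n.-1)%:R < (1 : R).
  by apply/andP; split; [apply: divr_gt0 | rewrite ltr_pdivrMr // mul1r]; lra.
have Hy0 : Pkn R n k y0.
  split.
    by move=> i; rewrite mxE; case: ifP => _; lra.
  under eq_bigr => i _ do rewrite mxE.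
  by rewrite sum_pt add0r -(mulr_natr (k%:R / (n.-1)%:R)) divfK // lt0r_neq0.
pose y1 (i1 : 'I_n) : 'rV[R]_n := \row_(i < n) (if i == i1 then 1 else (k%:R - 1) / (n.-1)%:R).
have Hy1 : forall i1, Pkn R n k (y1 i1).
  move=> i1; split.
    by move=> i; rewrite mxE; case: ifP => _; lra.
  under eq_bigr => i _ do rewrite mxE.
  by rewrite sum_pt -(mulr_natr ((k%:R - 1) / (n.-1)%:R)) divfK ?lt0r_neq0 // addrC subrK.
have Hleaf : forall p v, T p = LLeaf v -> 0 < v ord0 j0 ->
    (forall x, reach T x p = 0) \/ (2 <= sm T small [::] p)%N.
  move=> p v Hp Hv.
  have [i1 [Hi1 Hvi1]] := exists_small (HL p v Hp) (HLs p v Hp) (leqnn k : (k <= j0)%N) (ltnW Hkn') Hv.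
  case H1: (hasstep T j0 true [::] p); last first.
    left; apply: (reach_zero (y:=y0) (i0:=j0) (b0:=true)) => //; last 2 first.
    - by rewrite H1.
    - apply: (oc_zero (j:=j0) HT HL (proj1 Hy0) _ Hp Hv).
      by have := Hout _ Hy0 j0; rewrite mxE eqxx.
    move=> i b; rewrite /fac mxE; case: eqP => [_|_]; case: b => //= _; lra.
  case H2: (hasstep T i1 false [::] p); last first.
    left; apply: (reach_zero (y:=y1 i1) (i0:=i1) (b0:=false)) => //; last 2 first.
    - by rewrite H2.
    - apply: (oc_one (j:=i1) HT HL (proj1 (Hy1 i1)) (Hterm _ (Hy1 i1)) _ Hp Hvi1).
      by have := Hout _ (Hy1 i1) i1; rewrite mxE eqxx.
    move=> i b; rewrite /fac mxE; case: eqP => [_|_]; case: b => //= _; lra.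
  right; apply: (sm2 (i1:=j0) (b1:=true) (i2:=i1) (b2:=false)) => //.
  by rewrite /small /=.
have Htail : forall x, Pkn R n k x -> forall d, term_prob T x d.+1 <= tail_prob T x d.
  move=> x Hx d; rewrite /tail_prob.
  have := psum_le_lim (fun m => tp_ge0 m HT (proj1 Hx)) (Hterm x Hx) d.+2.
  rewrite big_ord_recr /=; lra.
have Htp1 : forall x, Pkn R n k x -> forall m, term_prob T x m <= 1.
  move=> x Hx m.
  have := psum_le_lim (fun m => tp_ge0 m HT (proj1 Hx)) (Hterm x Hx) m.+1.
  rewrite big_ord_recr /=.
  have : 0 <= \sum_(i < m) term_prob T x i by apply: sumr_ge0 => i _; apply: tp_ge0 => //; case: Hx.
  lra.
have Hc0 : 0 <= c.
  have := Hexp y0 Hy0 1%N isT; rewrite expr1.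
  have := Htail y0 Hy0 1%N; have := tp_ge0 2 HT (proj1 Hy0); lra.
have Hnk : (2 <= n - k)%N by lia.
have Hm : (2 : R) <= (n - k)%:R by rewrite (ler_nat R 2).
pose s : R := k%:R / (n - k)%:R.
have Hs : 0 < s by apply: divr_gt0; lra.
pose xe (e : R) : 'rV[R]_n := \row_(i < n) (if (i < k)%N then 1 - e else s * e).
have Hxe : forall e, 0 <= e -> e <= 1 -> s * e <= 1 -> Pkn R n k (xe e).
  move=> e He0 He1 Hse.
  have Hse0 : 0 <= s * e by apply: mulr_ge0 => //; lra.
  split.
    by move=> i; rewrite mxE; case: ifP => _; lra.
  under eq_bigr => i _ do rewrite mxE.
  rewrite sum_ite; last exact: ltnW.
  rewrite -(mulr_natr (1 - e)) -(mulr_natr (s * e)) /s; field; lra.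
pose eps0 := (1 - c) / (2 * (s + 1)).
have E0 : eps0 * (2 * (s + 1)) = 1 - c by rewrite /eps0 divfK //; lra.
have Heps0 : 0 < eps0 by apply: divr_gt0; lra.
have Hseps0 : 0 <= s * eps0 by apply: mulr_ge0; lra.
pose rho := 2 / (1 + c).
have Erho : rho * (1 + c) = 2 by rewrite /rho divfK //; lra.
have Hrho0 : 0 < rho by apply: divr_gt0; lra.
have Hrho1 : 1 <= rho.
  have : rho * c <= rho * 1 by apply: ler_wpM2l; lra.
  lra.
have Hq : rho * c < 1.
  have : rho * c < rho * 1 by rewrite ltr_pM2l //.
  lra.
have Hlarge : forall t, 0 <= t -> t <= (1 - c) / 2 -> 1 <= rho * (1 - t).
  move=> t Ht0 Ht1.
  have : 0 <= rho * ((1 - c) / 2 - t) by apply: mulr_ge0; lra.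
  lra.
pose K := 1 + rho + rho ^+ 2 / (1 - rho * c).
have HK : 1 <= K.
  have : 0 <= rho ^+ 2 / (1 - rho * c) by apply: divr_ge0; [apply: exprn_ge0|]; lra.
  rewrite /K; lra.
pose eps := s * eps0 ^+ 2 / (2 * K).
have Heps : 0 < eps by rewrite /eps; apply: divr_gt0; [apply: mulr_gt0 => //; apply: exprn_gt0|]; lra.
have Hepsle : eps <= eps0.
  rewrite /eps ler_pdivrMr; last lra.
  have : s * eps0 * eps0 <= (1 / 2) * eps0 by apply: ler_wpM2r; lra.
  have : (1 / 2) * eps0 <= eps0 * (2 * K) by nra.
  rewrite expr2; lra.
have Hseps : 0 <= s * eps by apply: mulr_ge0; lra.
have Hseps1 : s * eps <= s * eps0 by apply: ler_wpM2l; lra.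
have Hx0 : Pkn R n k (xe eps0) by apply: Hxe; lra.
have Hx : Pkn R n k (xe eps) by apply: Hxe; lra.
pose r := eps / eps0.
have Hr : 0 <= r <= 1.
  apply/andP; split; first by apply: divr_ge0; lra.
  by rewrite /r ler_pdivrMr // mul1r.
have Hratio : forall p, reach T (xe eps) p <=
    r ^+ sm T small [::] p * rho ^+ size p * reach T (xe eps0) p.
  move=> p; apply: reach_ratio => //; [exact: (proj1 Hx) | exact: (proj1 Hx0) | | ].
  - move=> i b; rewrite /small /fac !mxE; case: b => /= Hi.
      by rewrite ltnNge Hi /= /r; field; lra.
    by rewrite Hi /r; field; lra.
  - move=> i b; rewrite /small /fac !mxE; case: b => /= Hi.
      rewrite ltnNge Hi /=; have := Hlarge eps0; lra.
    rewrite (negbTE Hi); have := Hlarge (s * eps0); lra.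
have Hoc : forall m, out_contrib T (xe eps) j0 m <= r ^+ 2 * (rho ^+ m * term_prob T (xe eps0) m).
  move=> m; rewrite /out_contrib /term_prob !mulr_sumr; apply: ler_sum => q _.
  case Eq: (T (tval q)) => [i|c'|v|]; try by rewrite !mulr0.
  have Rx0 : 0 <= reach T (xe eps0) q by apply: reach_ge0 => //; case: Hx0.
  have Rx : 0 <= reach T (xe eps) q by apply: reach_ge0 => //; case: Hx.
  have Hr2 : 0 <= r ^+ 2 by apply: exprn_ge0; case/andP: Hr.
  have Hrh : 0 <= rho ^+ m by apply: exprn_ge0; lra.
  have RHS0 : 0 <= r ^+ 2 * (rho ^+ m * reach T (xe eps0) q) by apply: mulr_ge0 => //; apply: mulr_ge0.
  have Hv := HL _ _ Eq j0.
  case: (lerP (v ord0 j0) 0) => Hv0.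
    have : reach T (xe eps) q * v ord0 j0 <= 0 by apply: mulr_ge0_le0.
    lra.
  case: (Hleaf _ _ Eq Hv0) => [Hz|Hsm].
    by rewrite Hz mul0r.
  have H1 : reach T (xe eps) q * v ord0 j0 <= reach T (xe eps) q.
    rewrite -[X in _ <= X]mulr1; apply: ler_wpM2l => //; lra.
  apply: (le_trans H1); apply: (le_trans (Hratio q)).
  rewrite size_tuple mulrA; apply: ler_wpM2r => //; apply: ler_wpM2r => //.
  by case/andP: Hr => ? ?; apply: ler_wiXn2l.
have Hsum : forall N, \sum_(m < N) out_contrib T (xe eps) j0 m <= r ^+ 2 * K.
  move=> N.
  apply: (le_trans (y := \sum_(m < N) r ^+ 2 * (rho ^+ m * term_prob T (xe eps0) m))).
    by apply: ler_sum => m _; exact: Hoc.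
  rewrite -mulr_sumr; apply: ler_wpM2l; first by apply: exprn_ge0; case/andP: Hr.
  apply: geo_bound => //; first lra.
  - by move=> m; rewrite tp_ge0 ?Htp1 //; case: Hx0.
  - move=> m; apply: (le_trans (Htail _ Hx0 m.+1)); exact: Hexp.
have := lim_le_bound (Hout _ Hx j0) Hsum.
rewrite mxE /= ltnn.
have -> : r ^+ 2 * K = s * eps / 2.
  rewrite /r /eps; field; lra.
have : 0 < s * eps by apply: mulr_gt0.
lra.
Qed.
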